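(* If a formula $A$ is valid in every neighbourhood model satisfying centering (that is, in all models of $\mathbb{PC}$), then the sequent $\Rightarrow x:A$ is derivable in $\mathsf{CL}^C$.
   Context: Formulas $\mathcal{L}::=p\mid\bot\mid A\wedge B\mid A\lor B\mid A\to B\mid A>B$. Neighbourhood model $\langle W,N,\llbracket\cdot\rrbracket\rangle$: $W\ne\emptyset$, $N:W\to\mathcal{P}(\mathcal{P}(W))$ with all $\alpha\in N(x)$ non-empty; $x\Vdash A>B$ iff every $\alpha\in N(x)$ containing an $A$-world has some $\beta\in N(x)$, $\beta\subseteq\alpha$, containing an $A$-world, with all worlds of $\beta$ forcing $A\to B$. Centering: for all $x\in W$, $x\in\alpha$ for every $\alpha\in N(x)$, and $\{x\}\in N(x)$. $\mathsf{CL}^C$: world labels, neighbourhood labels including $\{x\}$ for each world label $x$; relational atoms $a\in N(x)$, $x\in a$, $a\subseteq b$; labelled formulas: these, $x:A$, $a\Vdash^\exists A$, $a\Vdash^\forall A$, $x\Vdash_aA|B$. Rules (premisses / conclusion; ''fresh'': not in conclusion): initial $x:p,\Gamma\Rightarrow\Delta,x:p$ ($p$ atomic), $x:\bot,\Gamma\Rightarrow\Delta$; G3 propositional rules; L$\forall$: $x:A,x\in a,a\Vdash^\forall A,\Gamma\Rightarrow\Delta$ / $x\in a,a\Vdash^\forall A,\Gamma\Rightarrow\Delta$; R$\forall$ (x fresh): $x\in a,\Gamma\Rightarrow\Delta,x:A$ / $\Gamma\Rightarrow\Delta,a\Vdash^\forall A$; L$\exists$ (x fresh): $x\in a,x:A,\Gamma\Rightarrow\Delta$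 / $a\Vdash^\exists A,\Gamma\Rightarrow\Delta$; R$\exists$: $x\in a,\Gamma\Rightarrow\Delta,x:A,a\Vdash^\exists A$ / $x\in a,\Gamma\Rightarrow\Delta,a\Vdash^\exists A$; R$>$ (a fresh): $a\in N(x),a\Vdash^\exists A,\Gamma\Rightarrow\Delta,x\Vdash_aA|B$ / $\Gamma\Rightarrow\Delta,x:A>B$; L$>$: $a\in N(x),x:A>B,\Gamma\Rightarrow\Delta,a\Vdash^\exists A$ and $x\Vdash_aA|B,a\in N(x),x:A>B,\Gamma\Rightarrow\Delta$ / $a\in N(x),x:A>B,\Gamma\Rightarrow\Delta$; R$|$: $c\in N(x),c\subseteq a,\Gamma\Rightarrow\Delta,x\Vdash_aA|B,c\Vdash^\exists A$ and $c\in N(x),c\subseteq a,\Gamma\Rightarrow\Delta,x\Vdash_aA|B,c\Vdash^\forall A\to B$ / $c\in N(x),c\subseteq a,\Gamma\Rightarrow\Delta,x\Vdash_aA|B$; L$|$ (c fresh): $c\in N(x),c\subseteq a,c\Vdash^\exists A,c\Vdash^\forall A\to B,\Gamma\Rightarrow\Delta$ / $x\Vdash_aA|B,\Gamma\Rightarrow\Delta$; Ref: $a\subseteq a,\Gamma\Rightarrow\Delta$ / $\Gamma\Rightarrow\Delta$; Tr: $c\subseteq a,c\subseteq b,b\subseteq a,\Gamma\Rightarrow\Delta$ / $c\subseteq b,b\subseteq a,\Gamma\Rightarrow\Delta$; L$\subseteq$: $x\in a,a\subseteq b,x\in b,\Gamma\Rightarrow\Delta$ / $x\in a,a\subseteq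 b,\Gamma\Rightarrow\Delta$; N (a fresh): $a\in N(x),\Gamma\Rightarrow\Delta$ / $\Gamma\Rightarrow\Delta$; 0 (y fresh): $y\in a,a\in N(x),\Gamma\Rightarrow\Delta$ / $a\in N(x),\Gamma\Rightarrow\Delta$; T (a fresh): $x\in a,a\in N(x),\Gamma\Rightarrow\Delta$ / $\Gamma\Rightarrow\Delta$; W: $x\in a,a\in N(x),\Gamma\Rightarrow\Delta$ / $a\in N(x),\Gamma\Rightarrow\Delta$; Single: $x\in\{x\},\{x\}\in N(x),\Gamma\Rightarrow\Delta$ / $\{x\}\in N(x),\Gamma\Rightarrow\Delta$; C: $\{x\}\in N(x),\{x\}\subseteq a,a\in N(x),\Gamma\Rightarrow\Delta$ / $a\in N(x),\Gamma\Rightarrow\Delta$; Repl$_1$: $y\in\{x\},At(x),At(y),\Gamma\Rightarrow\Delta$ / $y\in\{x\},At(x),\Gamma\Rightarrow\Delta$; Repl$_2$: $y\in\{x\},At(x),At(y),\Gamma\Rightarrow\Delta$ / $y\in\{x\},At(y),\Gamma\Rightarrow\Delta$, where $At(x)$ is one of $x:P$ ($P$ atomic), $x\in a$, $a\in N(x)$, $x\in\{z\}$ and $At(y)$ replaces $x$ by $y$. *)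

(* Defs.v *)
From Stdlib Require Import List Permutation.
Import ListNotations.

Inductive form : Type :=
| Atom : nat -> form
| Bot : form
| And : form -> form -> form
| Or : form -> form -> form
| Imp : form -> form -> form
| Cond : form -> form -> form.

Section Semantics.
Variables (W : Type) (N : W -> (W -> Prop) -> Prop) (V : nat -> W -> Prop).

Fixpoint forces (x : W) (A : form) : Prop :=
  match A with
  | Atom p => V p x
  | Bot => False
  | And A B => forces x A /\ forces x B
  | Or A B => forces x A \/ forces x B
  | Imp A B => forces x A -> forces x B
  | Cond A B =>
      forall alpha, N x alpha -> (exists y, alpha y /\ forces y A) ->
      exists beta, N x beta /\ (forall z, beta z -> alpha z) /\
        (exists y, beta y /\ forces y A) /\
        (forall z, beta z -> forces z A -> forces z B)
  end.

Definition nbhd_nonempty : Prop := forall x alpha, N x alpha -> exists y, alpha y.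

Definition centering : Prop :=
  (forall x alpha, N x alpha -> alpha x) /\ (forall x, N x (fun y => y = x)).
End Semantics.

Definition valid_PC (A : form) : Prop :=
  forall (W : Type) (N : W -> (W -> Prop) -> Prop) (V : nat -> W -> Prop),
    inhabited W -> nbhd_nonempty W N -> centering W N ->
    forall x : W, forces W N V x A.

(** neighbourhood labels: variables, or the singleton {x} of a world label x *)
Inductive nlabel : Type :=
| NVar : nat -> nlabel
| NSing : nat -> nlabel.

Inductive lform : Type :=
| LN : nlabel -> nat -> lform                   (* a ∈ N(x) *)
| LIn : nat -> nlabel -> lform                  (* x ∈ a *)
| LSub : nlabel -> nlabel -> lform              (* a ⊆ b *)
| LF : nat -> form -> lform                     (* x : A *)
| LEx : nlabel -> form -> lform                 (* a ⊩∃ A *)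
| LAll : nlabel -> form -> lform                (* a ⊩∀ A *)
| LCnd : nat -> nlabel -> form -> form -> lform. (* x ⊩_a A|B *)

Definition wocc_n (y : nat) (a : nlabel) : Prop := a = NSing y.

Definition wocc (y : nat) (f : lform) : Prop :=
  match f with
  | LN a x => wocc_n y a \/ x = y
  | LIn x a => x = y \/ wocc_n y a
  | LSub a b => wocc_n y a \/ wocc_n y b
  | LF x _ => x = y
  | LEx a _ => wocc_n y a
  | LAll a _ => wocc_n y a
  | LCnd x a _ _ => x = y \/ wocc_n y a
  end.

Definition nocc (n : nat) (f : lform) : Prop :=
  match f with
  | LN a _ => a = NVar n
  | LIn _ a => a = NVar n
  | LSub a b => a = NVar n \/ b = NVar n
  | LF _ _ => False
  | LEx a _ => a = NVar n
  | LAll a _ => a = NVar n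
  | LCnd _ a _ _ => a = NVar n
  end.

Definition wfresh (y : nat) (G D : list lform) : Prop :=
  forall f, In f (G ++ D) -> ~ wocc y f.
Definition nfresh (n : nat) (G D : list lform) : Prop :=
  forall f, In f (G ++ D) -> ~ nocc n f.

(** atomic formulas for the replacement rules: [At x y f g] means that
    f = At(x) and g = At(y) (x replaced by y in the distinguished position),
    At being one of  x:P (P atomic), x ∈ a, a ∈ N(x)  (x ∈ {z} is the case a = {z}). *)
Inductive At (x y : nat) : lform -> lform -> Prop :=
| At_atom p : At x y (LF x (Atom p)) (LF y (Atom p))
| At_in a : At x y (LIn x a) (LIn y a)
| At_N a : At x y (LN a x) (LN a y).

(** Sequents Γ ⇒ Δ with multiset contexts (lists up to permutation). *)
Inductive deriv : list lform -> list lform -> Prop :=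
| d_perm G G' D D' : Permutation G G' -> Permutation D D' ->
    deriv G D -> deriv G' D'
| d_init x p G D : deriv (LF x (Atom p) :: G) (LF x (Atom p) :: D)
| d_bot x G D : deriv (LF x Bot :: G) D
| d_Land x A B G D : deriv (LF x A :: LF x B :: G) D ->
    deriv (LF x (And A B) :: G) D
| d_Rand x A B G D : deriv G (LF x A :: D) -> deriv G (LF x B :: D) ->
    deriv G (LF x (And A B) :: D)
| d_Lor x A B G D : deriv (LF x A :: G) D -> deriv (LF x B :: G) D ->
    deriv (LF x (Or A B) :: G) D
| d_Ror x A B G D : deriv G (LF x A :: LF x B :: D) ->
    deriv G (LF x (Or A B) :: D)
| d_Limp x A B G D : deriv G (LF x A :: D) -> deriv (LF x B :: G) D ->
    deriv (LF x (Imp A B) :: G) D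
| d_Rimp x A B G D : deriv (LF x A :: G) (LF x B :: D) ->
    deriv G (LF x (Imp A B) :: D)
| d_Lall x a A G D :
    deriv (LF x A :: LIn x a :: LAll a A :: G) D ->
    deriv (LIn x a :: LAll a A :: G) D
| d_Rall x a A G D : wfresh x G (LAll a A :: D) ->
    deriv (LIn x a :: G) (LF x A :: D) ->
    deriv G (LAll a A :: D)
| d_Lex x a A G D : wfresh x (LEx a A :: G) D ->
    deriv (LIn x a :: LF x A :: G) D ->
    deriv (LEx a A :: G) D
| d_Rex x a A G D :
    deriv (LIn x a :: G) (LF x A :: LEx a A :: D) ->
    deriv (LIn x a :: G) (LEx a A :: D)
| d_Rcond x a A B G D : nfresh a G (LF x (Cond A B) :: D) ->
    deriv (LN (NVar a) x :: LEx (NVar a) A :: G) (LCnd x (NVar a) A B :: D) ->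
    deriv G (LF x (Cond A B) :: D)
| d_Lcond x a A B G D :
    deriv (LN a x :: LF x (Cond A B) :: G) (LEx a A :: D) ->
    deriv (LCnd x a A B :: LN a x :: LF x (Cond A B) :: G) D ->
    deriv (LN a x :: LF x (Cond A B) :: G) D
| d_Rbar x a c A B G D :
    deriv (LN c x :: LSub c a :: G) (LCnd x a A B :: LEx c A :: D) ->
    deriv (LN c x :: LSub c a :: G) (LCnd x a A B :: LAll c (Imp A B) :: D) ->
    deriv (LN c x :: LSub c a :: G) (LCnd x a A B :: D)
| d_Lbar x a c A B G D : nfresh c (LCnd x a A B :: G) D ->
    deriv (LN (NVar c) x :: LSub (NVar c) a :: LEx (NVar c) A
             :: LAll (NVar c) (Imp A B) :: G) D ->
    deriv (LCnd x a A B :: G) D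
| d_Ref a G D : deriv (LSub a a :: G) D -> deriv G D
| d_Tr a b c G D : deriv (LSub c a :: LSub c b :: LSub b a :: G) D ->
    deriv (LSub c b :: LSub b a :: G) D
| d_Lsub x a b G D : deriv (LIn x a :: LSub a b :: LIn x b :: G) D ->
    deriv (LIn x a :: LSub a b :: G) D
| d_N x a G D : nfresh a G D -> deriv (LN (NVar a) x :: G) D -> deriv G D
| d_0 x y a G D : wfresh y (LN a x :: G) D ->
    deriv (LIn y a :: LN a x :: G) D -> deriv (LN a x :: G) D
| d_T x a G D : nfresh a G D ->
    deriv (LIn x (NVar a) :: LN (NVar a) x :: G) D -> deriv G D
| d_W x a G D : deriv (LIn x a :: LN a x :: G) D -> deriv (LN a x :: G) D
| d_Single x G D : deriv (LIn x (NSing x) :: LN (NSing x) x :: G) D ->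
    deriv (LN (NSing x) x :: G) D
| d_C x a G D :
    deriv (LN (NSing x) x :: LSub (NSing x) a :: LN a x :: G) D ->
    deriv (LN a x :: G) D
| d_Repl1 x y f g G D : At x y f g ->
    deriv (LIn y (NSing x) :: f :: g :: G) D ->
    deriv (LIn y (NSing x) :: f :: G) D
| d_Repl2 x y f g G D : At x y f g ->
    deriv (LIn y (NSing x) :: f :: g :: G) D ->
    deriv (LIn y (NSing x) :: g :: G) D.

(* Main.v *)
Require Import Defs.
From Stdlib Require Import List Permutation Arith Lia Bool Relations Cantor.
From Stdlib Require Import Classical ClassicalEpsilon FunctionalExtensionality PropExtensionality.
Import ListNotations.


Definition form_eq_dec : forall A B : form, {A = B} + {A <> B}.
Proof. decide equality; apply Nat.eq_dec. Defined.
Definition nlabel_eq_dec : forall a b : nlabel, {a = b} + {a <> b}.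
Proof. decide equality; apply Nat.eq_dec. Defined.
Definition lform_eq_dec : forall f g : lform, {f = g} + {f <> g}.
Proof. decide equality; try apply Nat.eq_dec; try apply nlabel_eq_dec; try apply form_eq_dec. Defined.

#[global] Opaque form_eq_dec nlabel_eq_dec lform_eq_dec.

Fixpoint rm (f : lform) (l : list lform) : list lform :=
  match l with
  | [] => []
  | g :: l' => if lform_eq_dec f g then l' else g :: rm f l'
  end.

Lemma rm_perm f l : In f l -> Permutation l (f :: rm f l).
Proof.
  induction l as [|g l IH]; simpl; [tauto|].
  intros H. destruct (lform_eq_dec f g) as [->|Hne]; [reflexivity|].
  destruct H as [->|H]; [congruence|].
  eapply perm_trans; [apply perm_skip, IH, H|]. apply perm_swap.
Qed.

Lemma rm_in f g l : In g (rm f l) -> In g l.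
Proof.
  induction l as [|h l IH]; simpl; [tauto|].
  destruct (lform_eq_dec f h); simpl; intuition.
Qed.

Lemma in_rm f g l : In g l -> g <> f -> In g (rm f l).
Proof.
  induction l as [|h l IH]; simpl; [tauto|].
  destruct (lform_eq_dec f h) as [->|]; simpl; intros [->|H] Hne; auto; congruence.
Qed.

Lemma rm2_perm f1 f2 l : In f1 l -> In f2 l -> f2 <> f1 ->
  Permutation l (f1 :: f2 :: rm f2 (rm f1 l)).
Proof.
  intros H1 H2 Hne. eapply perm_trans; [apply rm_perm, H1|].
  apply perm_skip, rm_perm, in_rm; auto.
Qed.

Lemma perm3 {T} (x y z : T) l : Permutation (z :: x :: y :: l) (x :: y :: z :: l).
Proof.
  eapply perm_trans; [apply perm_swap|]. apply perm_skip, perm_swap.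
Qed.

Definition inb (f : lform) (l : list lform) : bool :=
  if in_dec lform_eq_dec f l then true else false.
Lemma inb_true f l : inb f l = true <-> In f l.
Proof. unfold inb; destruct (in_dec lform_eq_dec f l); split; intuition congruence. Qed.

Definition wl_n (a : nlabel) : list nat := match a with NVar _ => [] | NSing y => [y] end.
Definition wl (f : lform) : list nat :=
  match f with
  | LN a x => x :: wl_n a
  | LIn x a => x :: wl_n a
  | LSub a b => wl_n a ++ wl_n b
  | LF x _ => [x]
  | LEx a _ => wl_n a
  | LAll a _ => wl_n a
  | LCnd x a _ _ => x :: wl_n a
  end.
Definition nl_n (a : nlabel) : list nat := match a with NVar n => [n] | NSing _ => [] end.
Definition nll (f : lform) : list nat :=
  match f with
  | LN a _ => nl_n a
  | LIn _ a => nl_n a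
  | LSub a b => nl_n a ++ nl_n b
  | LF _ _ => []
  | LEx a _ => nl_n a
  | LAll a _ => nl_n a
  | LCnd _ a _ _ => nl_n a
  end.

Lemma wocc_wl y f : wocc y f -> In y (wl f).
Proof.
  destruct f; simpl in *; unfold wocc_n in *; intuition subst; simpl; auto with datatypes.
Qed.
Lemma nocc_nll n f : nocc n f -> In n (nll f).
Proof.
  destruct f; simpl; intuition subst; simpl; auto with datatypes.
Qed.

Definition maxl (l : list nat) : nat := fold_right max 0 l.
Lemma maxl_ge y l : In y l -> y <= maxl l.
Proof. induction l; simpl; [tauto|]. intros [->|H]; [lia|]. specialize (IHl H). lia. Qed.

Definition fw (G D : list lform) : nat := S (maxl (flat_map wl (G ++ D))).
Definition fn (G D : list lform) : nat := S (maxl (flat_map nll (G ++ D))).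

Lemma fw_fresh G D G' D' : incl G' G -> incl D' D -> wfresh (fw G D) G' D'.
Proof.
  intros HG HD f Hf Ho. apply wocc_wl in Ho.
  assert (In f (G ++ D)) as Hf2.
  { apply in_app_or in Hf; apply in_or_app; destruct Hf; auto. }
  assert (In (fw G D) (flat_map wl (G ++ D))) as Hm by (apply in_flat_map; eauto).
  apply maxl_ge in Hm. unfold fw in Hm. lia.
Qed.
Lemma fn_fresh G D G' D' : incl G' G -> incl D' D -> nfresh (fn G D) G' D'.
Proof.
  intros HG HD f Hf Ho. apply nocc_nll in Ho.
  assert (In f (G ++ D)) as Hf2.
  { apply in_app_or in Hf; apply in_or_app; destruct Hf; auto. }
  assert (In (fn G D) (flat_map nll (G ++ D))) as Hm by (apply in_flat_map; eauto).
  apply maxl_ge in Hm. unfold fn in Hm. lia.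
Qed.

Definition pr (a b : nat) : nat := Cantor.to_nat (a, b).
Lemma pr_inj a b c d : pr a b = pr c d -> a = c /\ b = d.
Proof. unfold pr; intro H. apply Cantor.to_nat_inj in H. injection H; auto. Qed.

Ltac prinj := repeat match goal with H : pr _ _ = pr _ _ |- _ => apply pr_inj in H; destruct H end.

Fixpoint ef (A : form) : nat :=
  match A with
  | Atom p => pr 0 p | Bot => pr 1 0
  | And A B => pr 2 (pr (ef A) (ef B)) | Or A B => pr 3 (pr (ef A) (ef B))
  | Imp A B => pr 4 (pr (ef A) (ef B)) | Cond A B => pr 5 (pr (ef A) (ef B))
  end.
Lemma ef_inj A B : ef A = ef B -> A = B.
Proof.
  revert B; induction A; destruct B; simpl; intro H; prinj; try congruence;
  f_equal; auto.
Qed.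
Definition en (a : nlabel) : nat := match a with NVar n => pr 0 n | NSing n => pr 1 n end.
Lemma en_inj a b : en a = en b -> a = b.
Proof. destruct a, b; simpl; intro H; prinj; congruence. Qed.
Definition el (f : lform) : nat :=
  match f with
  | LN a x => pr 0 (pr (en a) x)
  | LIn x a => pr 1 (pr x (en a))
  | LSub a b => pr 2 (pr (en a) (en b))
  | LF x A => pr 3 (pr x (ef A))
  | LEx a A => pr 4 (pr (en a) (ef A))
  | LAll a A => pr 5 (pr (en a) (ef A))
  | LCnd x a A B => pr 6 (pr x (pr (en a) (pr (ef A) (ef B))))
  end.
Lemma el_inj f g : el f = el g -> f = g.
Proof.
  destruct f, g; simpl; intro H; prinj; try congruence;
  repeat match goal with H : en _ = en _ |- _ => apply en_inj in H
                    | H : ef _ = ef _ |- _ => apply ef_inj in H end; congruence.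
Qed.

Record task := mkT { tg : nat; n1 : nat; n2 : nat; n3 : nat;
  l1 : nlabel; l2 : nlabel; l3 : nlabel; f1 : form; f2 : form; lf : lform }.
Definition et (t : task) : nat :=
  pr (tg t) (pr (n1 t) (pr (n2 t) (pr (n3 t) (pr (en (l1 t)) (pr (en (l2 t))
    (pr (en (l3 t)) (pr (ef (f1 t)) (pr (ef (f2 t)) (el (lf t)))))))))).
Lemma et_inj s t : et s = et t -> s = t.
Proof.
  destruct s, t; unfold et; simpl; intro H; prinj;
  repeat match goal with H : en _ = en _ |- _ => apply en_inj in H
                    | H : ef _ = ef _ |- _ => apply ef_inj in H
                    | H : el _ = el _ |- _ => apply el_inj in H end; congruence.
Qed.

Definition dtask : task := mkT 100 0 0 0 (NVar 0) (NVar 0) (NVar 0) Bot Bot (LF 0 Bot).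
Definition dec (k : nat) : task :=
  match excluded_middle_informative (exists t, et t = k) with
  | left H => proj1_sig (constructive_indefinite_description _ H)
  | right _ => dtask
  end.
Lemma dec_et t : dec (et t) = t.
Proof.
  unfold dec. destruct excluded_middle_informative as [H|H]; [|exfalso; eauto].
  destruct constructive_indefinite_description as [t' Ht']; simpl. apply et_inj; auto.
Qed.
Definition sched (n : nat) : task := dec (fst (Cantor.of_nat n)).
Lemma sched_fair t m : exists n, m <= n /\ sched n = t.
Proof.
  exists (Cantor.to_nat (et t, m)). split.
  - pose proof (Cantor.to_nat_non_decreasing (et t) m). lia.
  - unfold sched. rewrite Cantor.cancel_of_to. simpl. apply dec_et.
Qed.


Lemma pullL f G D : In f G -> deriv (f :: rm f G) D -> deriv G D.
Proof. intros H1 H2. eapply d_perm; [symmetry; apply rm_perm, H1 | reflexivity | exact H2]. Qed.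
Lemma pullR f G D : In f D -> deriv G (f :: rm f D) -> deriv G D.
Proof. intros H1 H2. eapply d_perm; [reflexivity | symmetry; apply rm_perm, H1 | exact H2]. Qed.

Lemma s_allL y a A G D : In (LIn y a) G -> In (LAll a A) G -> deriv (LF y A :: G) D -> deriv G D.
Proof.
  intros H1 H2 H. pose proof (rm2_perm _ _ _ H1 H2 ltac:(discriminate)) as P.
  eapply d_perm; [symmetry; exact P | reflexivity |]. apply d_Lall.
  eapply d_perm; [apply perm_skip, P | reflexivity | exact H].
Qed.

Lemma s_exR y a A G D : In (LIn y a) G -> In (LEx a A) D -> deriv G (LF y A :: D) -> deriv G D.
Proof.
  intros H1 H2 H. pose proof (rm_perm _ _ H1) as PG. pose proof (rm_perm _ _ H2) as PD.
  eapply d_perm; [symmetry; exact PG | symmetry; exact PD |]. apply d_Rex.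
  eapply d_perm; [exact PG | apply perm_skip, PD | exact H].
Qed.

Lemma s_condL a x A B G D : In (LN a x) G -> In (LF x (Cond A B)) G ->
  deriv G (LEx a A :: D) -> deriv (LCnd x a A B :: G) D -> deriv G D.
Proof.
  intros H1 H2 Ha Hb. pose proof (rm2_perm _ _ _ H1 H2 ltac:(discriminate)) as P.
  eapply d_perm; [symmetry; exact P | reflexivity |]. apply d_Lcond.
  - eapply d_perm; [exact P | reflexivity | exact Ha].
  - eapply d_perm; [apply perm_skip, P | reflexivity | exact Hb].
Qed.

Lemma s_barR c x a A B G D : In (LN c x) G -> In (LSub c a) G -> In (LCnd x a A B) D ->
  deriv G (LEx c A :: D) -> deriv G (LAll c (Imp A B) :: D) -> deriv G D.
Proof.
  intros H1 H2 H3 Ha Hb. pose proof (rm2_perm _ _ _ H1 H2 ltac:(discriminate)) as P.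
  pose proof (rm_perm _ _ H3) as PD.
  eapply d_perm; [symmetry; exact P | symmetry; exact PD |]. apply d_Rbar.
  - eapply d_perm; [exact P | | exact Ha].
    eapply perm_trans; [apply perm_skip, PD | apply perm_swap].
  - eapply d_perm; [exact P | | exact Hb].
    eapply perm_trans; [apply perm_skip, PD | apply perm_swap].
Qed.

Lemma s_tr a b c G D : In (LSub c b) G -> In (LSub b a) G -> LSub b a <> LSub c b ->
  deriv (LSub c a :: G) D -> deriv G D.
Proof.
  intros H1 H2 Hne H. pose proof (rm2_perm _ _ _ H1 H2 Hne) as P.
  eapply d_perm; [symmetry; exact P | reflexivity |]. apply d_Tr.
  eapply d_perm; [apply perm_skip, P | reflexivity | exact H].
Qed.

Lemma s_sub y a b G D : In (LIn y a) G -> In (LSub a b) G -> deriv (LIn y b :: G) D -> deriv G D.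
Proof.
  intros H1 H2 H. pose proof (rm2_perm _ _ _ H1 H2 ltac:(discriminate)) as P.
  eapply d_perm; [symmetry; exact P | reflexivity |]. apply d_Lsub.
  eapply d_perm; [ | reflexivity | exact H].
  eapply perm_trans; [apply perm_skip, P | apply perm3].
Qed.

Lemma s_W a x G D : In (LN a x) G -> deriv (LIn x a :: G) D -> deriv G D.
Proof.
  intros H1 H. apply (pullL _ _ _ H1). apply d_W.
  eapply d_perm; [apply perm_skip, rm_perm, H1 | reflexivity | exact H].
Qed.

Lemma s_C a x G D : In (LN a x) G -> deriv (LN (NSing x) x :: LSub (NSing x) a :: G) D -> deriv G D.
Proof.
  intros H1 H. apply (pullL _ _ _ H1). apply d_C.
  eapply d_perm; [apply (Permutation_app_head [_;_]), rm_perm, H1 | reflexivity | exact H].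
Qed.

Lemma s_repl1 u v f g G D : At v u f g -> f <> LIn u (NSing v) ->
  In (LIn u (NSing v)) G -> In f G -> deriv (g :: G) D -> deriv G D.
Proof.
  intros HA Hne H1 H2 H. pose proof (rm2_perm _ _ _ H1 H2 Hne) as P.
  eapply d_perm; [symmetry; exact P | reflexivity |]. apply (d_Repl1 _ _ _ _ _ _ HA).
  eapply d_perm; [ | reflexivity | exact H].
  eapply perm_trans; [apply perm_skip, P | apply perm3].
Qed.

Lemma s_repl2 u v f g G D : At v u f g -> g <> LIn u (NSing v) ->
  In (LIn u (NSing v)) G -> In g G -> deriv (f :: G) D -> deriv G D.
Proof.
  intros HA Hne H1 H2 H. pose proof (rm2_perm _ _ _ H1 H2 Hne) as P.
  eapply d_perm; [symmetry; exact P | reflexivity |]. apply (d_Repl2 _ _ _ _ _ _ HA).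
  eapply d_perm; [ | reflexivity | exact H].
  eapply perm_trans; [apply perm_skip, P | apply perm_swap].
Qed.


Definition seqt := (list lform * list lform)%type.

Definition premsL (f : lform) (G D : list lform) : list seqt :=
  if inb f G then
    match f with
    | LF x (And A B) => [(LF x A :: LF x B :: rm f G, D)]
    | LF x (Or A B) => [(LF x A :: rm f G, D); (LF x B :: rm f G, D)]
    | LF x (Imp A B) => [(rm f G, LF x A :: D); (LF x B :: rm f G, D)]
    | LEx a A => [(LIn (fw G D) a :: LF (fw G D) A :: rm f G, D)]
    | LCnd x a A B => [(LN (NVar (fn G D)) x :: LSub (NVar (fn G D)) a
                        :: LEx (NVar (fn G D)) A :: LAll (NVar (fn G D)) (Imp A B) :: rm f G, D)]
    | _ => []
    end
  else [].

Definition premsR (f : lform) (G D : list lform) : list seqt :=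
  if inb f D then
    match f with
    | LF x (And A B) => [(G, LF x A :: rm f D); (G, LF x B :: rm f D)]
    | LF x (Or A B) => [(G, LF x A :: LF x B :: rm f D)]
    | LF x (Imp A B) => [(LF x A :: G, LF x B :: rm f D)]
    | LF x (Cond A B) => [(LN (NVar (fn G D)) x :: LEx (NVar (fn G D)) A :: G,
                           LCnd x (NVar (fn G D)) A B :: rm f D)]
    | LAll a A => [(LIn (fw G D) a :: G, LF (fw G D) A :: rm f D)]
    | _ => []
    end
  else [].

Definition prems (t : task) (s : seqt) : list seqt :=
  let G := fst s in let D := snd s in
  match tg t with
  | 0 => premsL (lf t) G D
  | 1 => premsR (lf t) G D
  | 2 => if inb (LIn (n1 t) (l1 t)) G && inb (LAll (l1 t) (f1 t)) G
         then [(LF (n1 t) (f1 t) :: G, D)] else []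
  | 3 => if inb (LIn (n1 t) (l1 t)) G && inb (LEx (l1 t) (f1 t)) D
         then [(G, LF (n1 t) (f1 t) :: D)] else []
  | 4 => if inb (LN (l1 t) (n1 t)) G && inb (LF (n1 t) (Cond (f1 t) (f2 t))) G
         then [(G, LEx (l1 t) (f1 t) :: D); (LCnd (n1 t) (l1 t) (f1 t) (f2 t) :: G, D)] else []
  | 5 => if inb (LN (l1 t) (n1 t)) G && inb (LSub (l1 t) (l2 t)) G
            && inb (LCnd (n1 t) (l2 t) (f1 t) (f2 t)) D
         then [(G, LEx (l1 t) (f1 t) :: D); (G, LAll (l1 t) (Imp (f1 t) (f2 t)) :: D)] else []
  | 6 => [(LSub (l1 t) (l1 t) :: G, D)]
  | 7 => if inb (LSub (l3 t) (l2 t)) G && inb (LSub (l2 t) (l1 t)) G then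
           if lform_eq_dec (LSub (l2 t) (l1 t)) (LSub (l3 t) (l2 t)) then []
           else [(LSub (l3 t) (l1 t) :: G, D)] else []
  | 8 => if inb (LIn (n1 t) (l1 t)) G && inb (LSub (l1 t) (l2 t)) G
         then [(LIn (n1 t) (l2 t) :: G, D)] else []
  | 9 => [(LIn (n1 t) (NVar (fn G D)) :: LN (NVar (fn G D)) (n1 t) :: G, D)]
  | 10 => if inb (LN (l1 t) (n1 t)) G then [(LIn (n1 t) (l1 t) :: G, D)] else []
  | 11 => if inb (LN (l1 t) (n1 t)) G
          then [(LN (NSing (n1 t)) (n1 t) :: LSub (NSing (n1 t)) (l1 t) :: G, D)] else []
  | 12 => if inb (LIn (n1 t) (NSing (n2 t))) G && inb (LF (n2 t) (Atom (n3 t))) G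
          then [(LF (n1 t) (Atom (n3 t)) :: G, D)] else []
  | 13 => if inb (LIn (n1 t) (NSing (n2 t))) G && inb (LF (n1 t) (Atom (n3 t))) G
          then [(LF (n2 t) (Atom (n3 t)) :: G, D)] else []
  | 14 => if inb (LIn (n1 t) (NSing (n2 t))) G && inb (LN (l1 t) (n2 t)) G
          then [(LN (l1 t) (n1 t) :: G, D)] else []
  | 15 => if inb (LIn (n1 t) (NSing (n2 t))) G && inb (LN (l1 t) (n1 t)) G
          then [(LN (l1 t) (n2 t) :: G, D)] else []
  | _ => []
  end.

Definition allder (ps : list seqt) := forall p, In p ps -> deriv (fst p) (snd p).

Ltac inbs := repeat match goal with
  | |- context [inb ?f ?l] => let E := fresh "E" in destruct (inb f l) eqn:E; cbn [andb]
  | H : inb _ _ = true |- _ => apply inb_true in H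
  end.

Lemma incl_cons_rm f g G : In f G -> incl (f :: rm g G) G.
Proof. intros H h [<-|Hh]; auto. eapply rm_in; eauto. Qed.
Lemma incl_rm g G : incl (rm g G) G.
Proof. intros h Hh. eapply rm_in; eauto. Qed.

Lemma premsL_sound f G D : premsL f G D <> [] -> allder (premsL f G D) -> deriv G D.
Proof.
  unfold premsL. inbs; [|congruence]. intros Hne H.
  destruct f as [a x|x a|a b|x A|a A|a A|x a A B]; try congruence.
  - destruct A as [p| |A B|A B|A B|A B]; try congruence.
    + apply (pullL _ _ _ E). apply d_Land. apply (H _ (or_introl eq_refl)).
    + apply (pullL _ _ _ E). apply d_Lor. apply (H _ (or_introl eq_refl)).
      apply (H _ (or_intror (or_introl eq_refl))).
    + apply (pullL _ _ _ E). apply d_Limp. apply (H _ (or_introl eq_refl)).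
      apply (H _ (or_intror (or_introl eq_refl))).
  - apply (pullL _ _ _ E). apply (d_Lex (fw G D)).
    + apply fw_fresh; [apply incl_cons_rm; auto | apply incl_refl].
    + apply (H _ (or_introl eq_refl)).
  - apply (pullL _ _ _ E). apply (d_Lbar _ _ (fn G D)).
    + apply fn_fresh; [apply incl_cons_rm; auto | apply incl_refl].
    + apply (H _ (or_introl eq_refl)).
Qed.

Lemma premsR_sound f G D : premsR f G D <> [] -> allder (premsR f G D) -> deriv G D.
Proof.
  unfold premsR. inbs; [|congruence]. intros Hne H.
  destruct f as [a x|x a|a b|x A|a A|a A|x a A B]; try congruence.
  - destruct A as [p| |A B|A B|A B|A B]; try congruence.
    + apply (pullR _ _ _ E). apply d_Rand. apply (H _ (or_introl eq_refl)).
      apply (H _ (or_intror (or_introl eq_refl))).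
    + apply (pullR _ _ _ E). apply d_Ror. apply (H _ (or_introl eq_refl)).
    + apply (pullR _ _ _ E). apply d_Rimp. apply (H _ (or_introl eq_refl)).
    + apply (pullR _ _ _ E). apply (d_Rcond _ (fn G D)).
      * apply fn_fresh; [apply incl_refl | apply incl_cons_rm; auto].
      * apply (H _ (or_introl eq_refl)).
  - apply (pullR _ _ _ E). apply (d_Rall (fw G D)).
    + apply fw_fresh; [apply incl_refl | apply incl_cons_rm; auto].
    + apply (H _ (or_introl eq_refl)).
Qed.

Lemma prems_sound t s : prems t s <> [] -> allder (prems t s) -> deriv (fst s) (snd s).
Proof.
  destruct s as [G D]. destruct t as [k m1 m2 m3 a1 a2 a3 A1 A2 g].
  unfold prems; cbv beta zeta; cbn [fst snd tg n1 n2 n3 l1 l2 l3 f1 f2 lf].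
  destruct k as [|[|[|[|[|[|[|[|[|[|[|[|[|[|[|[|k]]]]]]]]]]]]]]]]; cbv iota beta;
    [ .. | congruence].
  all: inbs; try congruence; intros Hne0 H.
  - apply (premsL_sound g); auto.
  - apply (premsR_sound g); auto.
  - apply (s_allL m1 a1 A1); auto. apply (H _ (or_introl eq_refl)).
  - apply (s_exR m1 a1 A1); auto. apply (H _ (or_introl eq_refl)).
  - apply (s_condL a1 m1 A1 A2); auto. apply (H _ (or_introl eq_refl)).
    apply (H _ (or_intror (or_introl eq_refl))).
  - apply (s_barR a1 m1 a2 A1 A2); auto. apply (H _ (or_introl eq_refl)).
    apply (H _ (or_intror (or_introl eq_refl))).
  - apply (d_Ref a1). apply (H _ (or_introl eq_refl)).
  - destruct (lform_eq_dec (LSub a2 a1) (LSub a3 a2)); [congruence|].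
    apply (s_tr a1 a2 a3); auto. apply (H _ (or_introl eq_refl)).
  - apply (s_sub m1 a1 a2); auto. apply (H _ (or_introl eq_refl)).
  - apply (d_T m1 (fn G D)). apply fn_fresh; apply incl_refl. apply (H _ (or_introl eq_refl)).
  - apply (s_W a1 m1); auto. apply (H _ (or_introl eq_refl)).
  - apply (s_C a1 m1); auto. apply (H _ (or_introl eq_refl)).
  - eapply (s_repl1 m1 m2); [apply At_atom | discriminate | eauto | eauto |].
    apply (H _ (or_introl eq_refl)).
  - eapply (s_repl2 m1 m2); [apply At_atom | discriminate | eauto | eauto |].
    apply (H _ (or_introl eq_refl)).
  - eapply (s_repl1 m1 m2); [apply At_N | discriminate | eauto | eauto |].
    apply (H _ (or_introl eq_refl)).
  - eapply (s_repl2 m1 m2); [apply At_N | discriminate | eauto | eauto |].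
    apply (H _ (or_introl eq_refl)).
Qed.


Fixpoint pick (ps : list seqt) (d : seqt) : seqt :=
  match ps with
  | [] => d
  | p :: ps' => if excluded_middle_informative (deriv (fst p) (snd p)) then pick ps' d else p
  end.
Definition step (t : task) (s : seqt) : seqt := pick (prems t s) s.
Definition ok (s : seqt) : Prop := ~ deriv (fst s) (snd s).

Lemma pick_spec ps d : ~ allder ps -> In (pick ps d) ps /\ ok (pick ps d).
Proof.
  induction ps as [|p ps IH]; simpl; intro H.
  - exfalso; apply H; intros p [].
  - destruct excluded_middle_informative as [Hd|Hd].
    + assert (~ allder ps) as H2.
      { intro Ha; apply H; intros q [<-|Hq]; auto. }
      destruct (IH H2); auto.
    + split; auto.
Qed.

Lemma step_spec t s : ok s ->
  ok (step t s) /\ (prems t s = [] -> step t s = s) /\ (prems t s <> [] -> In (step t s) (prems t s)).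
Proof.
  intro Hs. unfold step. destruct (prems t s) as [|p ps] eqn:E.
  - simpl; auto.
  - assert (~ allder (p :: ps)) as Hn.
    { intro Ha. apply Hs. apply (prems_sound t); rewrite E; auto; discriminate. }
    destruct (pick_spec _ s Hn). split; auto. split; auto. discriminate.
Qed.

Fixpoint br (s0 : seqt) (n : nat) : seqt :=
  match n with 0 => s0 | S n => step (sched n) (br s0 n) end.

Lemma br_ok s0 : ok s0 -> forall n, ok (br s0 n).
Proof. intros H n; induction n; simpl; auto. apply step_spec; auto. Qed.

Definition delL (g : lform) : Prop :=
  match g with
  | LF _ (And _ _) | LF _ (Or _ _) | LF _ (Imp _ _) | LEx _ _ | LCnd _ _ _ _ => True
  | _ => False
  end.
Definition delR (g : lform) : Prop :=
  match g with
  | LF _ (And _ _) | LF _ (Or _ _) | LF _ (Imp _ _) | LF _ (Cond _ _) | LAll _ _ => True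
  | _ => False
  end.

Lemma premsL_nil g G D : ~ delL g -> premsL g G D = [].
Proof.
  intro H. unfold premsL. destruct (inb g G); auto.
  destruct g as [| | |x A| | |]; simpl in H; try tauto; auto.
  destruct A; simpl in H; tauto.
Qed.
Lemma premsR_nil g G D : ~ delR g -> premsR g G D = [].
Proof.
  intro H. unfold premsR. destruct (inb g D); auto.
  destruct g as [| | |x A| | |]; simpl in H; try tauto; auto.
  destruct A; simpl in H; tauto.
Qed.

Lemma inb_false f l : inb f l = false -> ~ In f l.
Proof. intros H H2. apply inb_true in H2. congruence. Qed.

Ltac inbs2 := repeat match goal with
  | H : context [inb ?f ?l] |- _ => let E := fresh "E" in destruct (inb f l) eqn:E; cbn [andb] in H;
       [apply inb_true in E | apply inb_false in E]
  end.

Lemma prems_keep t s p g : In p (prems t s) ->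
  (In g (fst s) -> In g (fst p) \/ (tg t = 0 /\ lf t = g)) /\
  (In g (snd s) -> In g (snd p) \/ (tg t = 1 /\ lf t = g)).
Proof.
  destruct s as [G D]. destruct t as [k m1 m2 m3 a1 a2 a3 A1 A2 f].
  unfold prems; cbv beta zeta; cbn [fst snd tg n1 n2 n3 l1 l2 l3 f1 f2 lf].
  destruct k as [|[|[|[|[|[|[|[|[|[|[|[|[|[|[|[|k]]]]]]]]]]]]]]]]; cbv iota beta;
    try (intros []; fail).
  - intro H. unfold premsL in H. inbs2; [|destruct H].
    assert (forall l, In g l -> In g (rm f l) \/ (0 = 0 /\ f = g)) as Hrm.
    { intros l Hl; destruct (lform_eq_dec g f); [right; auto | left; apply in_rm; auto]. }
    destruct f as [| | |x A| | |]; try destruct A;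
      simpl in H; repeat destruct H as [<-|H]; try contradiction; simpl;
      (split; intro Hg; [destruct (Hrm _ Hg); [left; simpl; tauto | right; auto] | left; simpl; tauto]).
  - intro H. unfold premsR in H. inbs2; [|destruct H].
    assert (forall l, In g l -> In g (rm f l) \/ (1 = 1 /\ f = g)) as Hrm.
    { intros l Hl; destruct (lform_eq_dec g f); [right; auto | left; apply in_rm; auto]. }
    destruct f as [| | |x A| | |]; try destruct A;
      simpl in H; repeat destruct H as [<-|H]; try contradiction; simpl;
      (split; intro Hg; [left; simpl; tauto | destruct (Hrm _ Hg); [left; simpl; tauto | right; auto]]).
  - intro H. inbs2; simpl in H; repeat destruct H as [<-|H]; try contradiction; simpl; auto.
  - intro H. inbs2; simpl in H; repeat destruct H as [<-|H]; try contradiction; simpl; auto.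
  - intro H. inbs2; simpl in H; repeat destruct H as [<-|H]; try contradiction; simpl; auto.
  - intro H. inbs2; simpl in H; repeat destruct H as [<-|H]; try contradiction; simpl; auto.
  - intro H. simpl in H; repeat destruct H as [<-|H]; try contradiction; simpl; auto.
  - intro H. inbs2; simpl in H; try contradiction.
    destruct (lform_eq_dec (LSub a2 a1) (LSub a3 a2)); simpl in H; try contradiction.
    repeat destruct H as [<-|H]; try contradiction; simpl; auto.
  - intro H. inbs2; simpl in H; repeat destruct H as [<-|H]; try contradiction; simpl; auto.
  - intro H. simpl in H; repeat destruct H as [<-|H]; try contradiction; simpl; auto.
  - intro H. inbs2; simpl in H; repeat destruct H as [<-|H]; try contradiction; simpl; auto.
  - intro H. inbs2; simpl in H; repeat destruct H as [<-|H]; try contradiction; simpl; auto.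
  - intro H. inbs2; simpl in H; repeat destruct H as [<-|H]; try contradiction; simpl; auto.
  - intro H. inbs2; simpl in H; repeat destruct H as [<-|H]; try contradiction; simpl; auto.
  - intro H. inbs2; simpl in H; repeat destruct H as [<-|H]; try contradiction; simpl; auto.
  - intro H. inbs2; simpl in H; repeat destruct H as [<-|H]; try contradiction; simpl; auto.
Qed.


Lemma prems_tg0 t s : tg t = 0 -> prems t s = premsL (lf t) (fst s) (snd s).
Proof. destruct t; simpl; intros ->; reflexivity. Qed.
Lemma prems_tg1 t s : tg t = 1 -> prems t s = premsR (lf t) (fst s) (snd s).
Proof. destruct t; simpl; intros ->; reflexivity. Qed.

Lemma step_keepL s0 n g : ok s0 -> In g (fst (br s0 n)) ->
  In g (fst (br s0 (S n))) \/ (tg (sched n) = 0 /\ lf (sched n) = g /\ delL g).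
Proof.
  intros H0 Hg. simpl. destruct (step_spec (sched n) (br s0 n) (br_ok s0 H0 n)) as [_ [Hnil Hin]].
  destruct (prems (sched n) (br s0 n)) eqn:E.
  - left; rewrite Hnil; auto.
  - assert (Hi := Hin ltac:(discriminate)). rewrite <- E in Hi.
    destruct (proj1 (prems_keep _ _ _ g Hi) Hg) as [|[H1 H2]]; auto.
    destruct (classic (delL g)) as [Hd|Hd]; [right; auto|].
    rewrite prems_tg0 in E by auto. rewrite H2, premsL_nil in E by auto. discriminate.
Qed.
Lemma step_keepR s0 n g : ok s0 -> In g (snd (br s0 n)) ->
  In g (snd (br s0 (S n))) \/ (tg (sched n) = 1 /\ lf (sched n) = g /\ delR g).
Proof.
  intros H0 Hg. simpl. destruct (step_spec (sched n) (br s0 n) (br_ok s0 H0 n)) as [_ [Hnil Hin]].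
  destruct (prems (sched n) (br s0 n)) eqn:E.
  - left; rewrite Hnil; auto.
  - assert (Hi := Hin ltac:(discriminate)). rewrite <- E in Hi.
    destruct (proj2 (prems_keep _ _ _ g Hi) Hg) as [|[H1 H2]]; auto.
    destruct (classic (delR g)) as [Hd|Hd]; [right; auto|].
    rewrite prems_tg1 in E by auto. rewrite H2, premsR_nil in E by auto. discriminate.
Qed.

Lemma persistL s0 g m n : ok s0 -> ~ delL g -> m <= n -> In g (fst (br s0 m)) -> In g (fst (br s0 n)).
Proof.
  intros H0 Hd Hmn Hg. induction Hmn; auto.
  destruct (step_keepL s0 m0 g H0 IHHmn) as [|[_ [_ ?]]]; tauto.
Qed.
Lemma persistR s0 g m n : ok s0 -> ~ delR g -> m <= n -> In g (snd (br s0 m)) -> In g (snd (br s0 n)).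
Proof.
  intros H0 Hd Hmn Hg. induction Hmn; auto.
  destruct (step_keepR s0 m0 g H0 IHHmn) as [|[_ [_ ?]]]; tauto.
Qed.

Lemma procL s0 g m : ok s0 -> delL g -> In g (fst (br s0 m)) ->
  exists k, In (br s0 (S k)) (premsL g (fst (br s0 k)) (snd (br s0 k))) /\ In g (fst (br s0 k)).
Proof.
  intros H0 Hd Hg.
  destruct (sched_fair (mkT 0 0 0 0 (NVar 0) (NVar 0) (NVar 0) Bot Bot g) m) as [n [Hmn Hs]].
  assert (exists k, tg (sched k) = 0 /\ lf (sched k) = g /\ In g (fst (br s0 k))) as [k [H1 [H2 H3]]].
  { assert (forall j, m <= j -> In g (fst (br s0 j)) \/
        exists k, tg (sched k) = 0 /\ lf (sched k) = g /\ In g (fst (br s0 k))) as Hj.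
    { intros j Hj; induction Hj; auto.
      destruct IHHj as [Hi|]; auto.
      destruct (step_keepL s0 m0 g H0 Hi) as [|[? [? _]]]; eauto. }
    destruct (Hj n Hmn) as [Hi|]; auto. exists n; rewrite Hs; auto. }
  exists k; split; auto. simpl.
  destruct (step_spec (sched k) (br s0 k) (br_ok s0 H0 k)) as [_ [_ Hin]].
  rewrite prems_tg0 in Hin by auto. rewrite H2 in Hin. apply Hin.
  unfold premsL. rewrite (proj2 (inb_true _ _) H3).
  destruct g as [| | |x A| | |]; simpl in Hd; try tauto; try discriminate.
  destruct A; simpl in Hd; try tauto; discriminate.
Qed.
Lemma procR s0 g m : ok s0 -> delR g -> In g (snd (br s0 m)) ->
  exists k, In (br s0 (S k)) (premsR g (fst (br s0 k)) (snd (br s0 k))) /\ In g (snd (br s0 k)).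
Proof.
  intros H0 Hd Hg.
  destruct (sched_fair (mkT 1 0 0 0 (NVar 0) (NVar 0) (NVar 0) Bot Bot g) m) as [n [Hmn Hs]].
  assert (exists k, tg (sched k) = 1 /\ lf (sched k) = g /\ In g (snd (br s0 k))) as [k [H1 [H2 H3]]].
  { assert (forall j, m <= j -> In g (snd (br s0 j)) \/
        exists k, tg (sched k) = 1 /\ lf (sched k) = g /\ In g (snd (br s0 k))) as Hj.
    { intros j Hj; induction Hj; auto.
      destruct IHHj as [Hi|]; auto.
      destruct (step_keepR s0 m0 g H0 Hi) as [|[? [? _]]]; eauto. }
    destruct (Hj n Hmn) as [Hi|]; auto. exists n; rewrite Hs; auto. }
  exists k; split; auto. simpl.
  destruct (step_spec (sched k) (br s0 k) (br_ok s0 H0 k)) as [_ [_ Hin]].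
  rewrite prems_tg1 in Hin by auto. rewrite H2 in Hin. apply Hin.
  unfold premsR. rewrite (proj2 (inb_true _ _) H3).
  destruct g as [| | |x A| | |]; simpl in Hd; try tauto; try discriminate.
  destruct A; simpl in Hd; try tauto; discriminate.
Qed.

Lemma fire s0 t m : ok s0 -> (forall n, m <= n -> prems t (br s0 n) <> []) ->
  exists n, m <= n /\ In (br s0 (S n)) (prems t (br s0 n)).
Proof.
  intros H0 H. destruct (sched_fair t m) as [n [Hmn Hs]]. exists n; split; auto.
  simpl. rewrite Hs. apply step_spec; auto. apply br_ok; auto.
Qed.

Definition Lset s0 g := exists n, In g (fst (br s0 n)).
Definition Rset s0 g := exists n, In g (snd (br s0 n)).

Lemma LsetP s0 g : ok s0 -> ~ delL g -> Lset s0 g -> exists m, forall n, m <= n -> In g (fst (br s0 n)).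
Proof. intros H0 Hd [m Hm]. exists m. intros n Hn. eapply persistL; eauto. Qed.
Lemma RsetP s0 g : ok s0 -> ~ delR g -> Rset s0 g -> exists m, forall n, m <= n -> In g (snd (br s0 n)).
Proof. intros H0 Hd [m Hm]. exists m. intros n Hn. eapply persistR; eauto. Qed.


Definition inbT {f l} (H : In f l) : inb f l = true := proj2 (inb_true f l) H.

Ltac delproc H0 g Hm k Hk :=
  let Hg := fresh "Hg" in
  destruct (procL _ g _ H0 I Hm) as [k [Hk Hg]]; unfold premsL in Hk;
  rewrite (inbT Hg) in Hk; simpl in Hk.
Ltac delprocR H0 g Hm k Hk :=
  let Hg := fresh "Hg" in
  destruct (procR _ g _ H0 I Hm) as [k [Hk Hg]]; unfold premsR in Hk;
  rewrite (inbT Hg) in Hk; simpl in Hk.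
Ltac fin k Hk := exists (S k); simpl; rewrite <- Hk; simpl; tauto.


Lemma satAndL s0 x A B : ok s0 -> Lset s0 (LF x (And A B)) -> Lset s0 (LF x A) /\ Lset s0 (LF x B).
Proof. intros H0 [m Hm]. delproc H0 (LF x (And A B)) Hm k Hk. destruct Hk as [Hk|[]]. split; fin k Hk. Qed.
Lemma satOrL s0 x A B : ok s0 -> Lset s0 (LF x (Or A B)) -> Lset s0 (LF x A) \/ Lset s0 (LF x B).
Proof. intros H0 [m Hm]. delproc H0 (LF x (Or A B)) Hm k Hk. destruct Hk as [Hk|[Hk|[]]]; [left|right]; fin k Hk. Qed.
Lemma satImpL s0 x A B : ok s0 -> Lset s0 (LF x (Imp A B)) -> Rset s0 (LF x A) \/ Lset s0 (LF x B).
Proof. intros H0 [m Hm]. delproc H0 (LF x (Imp A B)) Hm k Hk. destruct Hk as [Hk|[Hk|[]]]; [left|right]; fin k Hk. Qed.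
Lemma satExL s0 a A : ok s0 -> Lset s0 (LEx a A) -> exists y, Lset s0 (LIn y a) /\ Lset s0 (LF y A).
Proof. intros H0 [m Hm]. delproc H0 (LEx a A) Hm k Hk. destruct Hk as [Hk|[]]. eexists; split; fin k Hk. Qed.
Lemma satCndL s0 x a A B : ok s0 -> Lset s0 (LCnd x a A B) -> exists c, Lset s0 (LN c x) /\
  Lset s0 (LSub c a) /\ Lset s0 (LEx c A) /\ Lset s0 (LAll c (Imp A B)).
Proof. intros H0 [m Hm]. delproc H0 (LCnd x a A B) Hm k Hk. destruct Hk as [Hk|[]].
  eexists; split; [|split; [|split]]; fin k Hk. Qed.

Lemma satAndR s0 x A B : ok s0 -> Rset s0 (LF x (And A B)) -> Rset s0 (LF x A) \/ Rset s0 (LF x B).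
Proof. intros H0 [m Hm]. delprocR H0 (LF x (And A B)) Hm k Hk. destruct Hk as [Hk|[Hk|[]]]; [left|right]; fin k Hk. Qed.
Lemma satOrR s0 x A B : ok s0 -> Rset s0 (LF x (Or A B)) -> Rset s0 (LF x A) /\ Rset s0 (LF x B).
Proof. intros H0 [m Hm]. delprocR H0 (LF x (Or A B)) Hm k Hk. destruct Hk as [Hk|[]]. split; fin k Hk. Qed.
Lemma satImpR s0 x A B : ok s0 -> Rset s0 (LF x (Imp A B)) -> Lset s0 (LF x A) /\ Rset s0 (LF x B).
Proof. intros H0 [m Hm]. delprocR H0 (LF x (Imp A B)) Hm k Hk. destruct Hk as [Hk|[]]. split; fin k Hk. Qed.
Lemma satCondR s0 x A B : ok s0 -> Rset s0 (LF x (Cond A B)) -> exists a,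
  Lset s0 (LN a x) /\ Lset s0 (LEx a A) /\ Rset s0 (LCnd x a A B).
Proof. intros H0 [m Hm]. delprocR H0 (LF x (Cond A B)) Hm k Hk. destruct Hk as [Hk|[]].
  eexists; split; [|split]; fin k Hk. Qed.
Lemma satAllR s0 a A : ok s0 -> Rset s0 (LAll a A) -> exists y, Lset s0 (LIn y a) /\ Rset s0 (LF y A).
Proof. intros H0 [m Hm]. delprocR H0 (LAll a A) Hm k Hk. destruct Hk as [Hk|[]]. eexists; split; fin k Hk. Qed.

Ltac pers H0 g H P := destruct (LsetP _ g H0 (fun h => h) H) as [?m P].
Ltac persR H0 g H P := destruct (RsetP _ g H0 (fun h => h) H) as [?m P].

Lemma satAllL s0 y a A : ok s0 -> Lset s0 (LIn y a) -> Lset s0 (LAll a A) -> Lset s0 (LF y A).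
Proof.
  intros H0 H1 H2. pers H0 (LIn y a) H1 P1. pers H0 (LAll a A) H2 P2.
  destruct (fire s0 (mkT 2 y 0 0 a (NVar 0) (NVar 0) A Bot (LF 0 Bot)) (max m m0) H0) as [n [Hn Hin]].
  - intros n Hn. unfold prems; cbn [tg n1 n2 n3 l1 l2 l3 f1 f2 lf].
    rewrite (inbT (P1 n ltac:(lia))), (inbT (P2 n ltac:(lia))). discriminate.
  - unfold prems in Hin; cbn [tg n1 n2 n3 l1 l2 l3 f1 f2 lf] in Hin.
    rewrite (inbT (P1 n ltac:(lia))), (inbT (P2 n ltac:(lia))) in Hin. simpl in Hin.
    destruct Hin as [Hin|[]]. fin n Hin.
Qed.

Ltac cbnp := cbn [tg n1 n2 n3 l1 l2 l3 f1 f2 lf].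
Ltac cbnpH H := cbn [tg n1 n2 n3 l1 l2 l3 f1 f2 lf] in H.

Lemma satExR s0 y a A : ok s0 -> Lset s0 (LIn y a) -> Rset s0 (LEx a A) -> Rset s0 (LF y A).
Proof.
  intros H0 H1 H2. pers H0 (LIn y a) H1 P1. persR H0 (LEx a A) H2 P2.
  destruct (fire s0 (mkT 3 y 0 0 a (NVar 0) (NVar 0) A Bot (LF 0 Bot)) (max m m0) H0) as [n [Hn Hin]].
  - intros n Hn. unfold prems; cbnp.
    rewrite (inbT (P1 n ltac:(lia))), (inbT (P2 n ltac:(lia))). discriminate.
  - unfold prems in Hin; cbnpH Hin.
    rewrite (inbT (P1 n ltac:(lia))), (inbT (P2 n ltac:(lia))) in Hin. simpl in Hin.
    destruct Hin as [Hin|[]]. fin n Hin.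
Qed.

Lemma satCondL s0 a x A B : ok s0 -> Lset s0 (LN a x) -> Lset s0 (LF x (Cond A B)) ->
  Rset s0 (LEx a A) \/ Lset s0 (LCnd x a A B).
Proof.
  intros H0 H1 H2. pers H0 (LN a x) H1 P1. pers H0 (LF x (Cond A B)) H2 P2.
  destruct (fire s0 (mkT 4 x 0 0 a (NVar 0) (NVar 0) A B (LF 0 Bot)) (max m m0) H0) as [n [Hn Hin]].
  - intros n Hn. unfold prems; cbnp.
    rewrite (inbT (P1 n ltac:(lia))), (inbT (P2 n ltac:(lia))). discriminate.
  - unfold prems in Hin; cbnpH Hin.
    rewrite (inbT (P1 n ltac:(lia))), (inbT (P2 n ltac:(lia))) in Hin. simpl in Hin.
    destruct Hin as [Hin|[Hin|[]]]; [left|right]; fin n Hin.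
Qed.

Lemma satBarR s0 c x a A B : ok s0 -> Lset s0 (LN c x) -> Lset s0 (LSub c a) ->
  Rset s0 (LCnd x a A B) -> Rset s0 (LEx c A) \/ Rset s0 (LAll c (Imp A B)).
Proof.
  intros H0 H1 H2 H3. pers H0 (LN c x) H1 P1. pers H0 (LSub c a) H2 P2. persR H0 (LCnd x a A B) H3 P3.
  destruct (fire s0 (mkT 5 x 0 0 c a (NVar 0) A B (LF 0 Bot)) (max (max m m0) m1) H0) as [n [Hn Hin]].
  - intros n Hn. unfold prems; cbnp.
    rewrite (inbT (P1 n ltac:(lia))), (inbT (P2 n ltac:(lia))), (inbT (P3 n ltac:(lia))). discriminate.
  - unfold prems in Hin; cbnpH Hin.
    rewrite (inbT (P1 n ltac:(lia))), (inbT (P2 n ltac:(lia))), (inbT (P3 n ltac:(lia))) in Hin. simpl in Hin.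
    destruct Hin as [Hin|[Hin|[]]]; [left|right]; fin n Hin.
Qed.

Lemma satRef s0 a : ok s0 -> Lset s0 (LSub a a).
Proof.
  intros H0.
  destruct (fire s0 (mkT 6 0 0 0 a (NVar 0) (NVar 0) Bot Bot (LF 0 Bot)) 0 H0) as [n [Hn Hin]].
  - intros n Hn. unfold prems; cbnp. discriminate.
  - unfold prems in Hin; cbnpH Hin. simpl in Hin. destruct Hin as [Hin|[]]. fin n Hin.
Qed.

Lemma satTr s0 a b c : ok s0 -> Lset s0 (LSub c b) -> Lset s0 (LSub b a) -> Lset s0 (LSub c a).
Proof.
  intros H0 H1 H2. destruct (lform_eq_dec (LSub b a) (LSub c b)) as [He|Hne].
  { injection He; intros; subst; auto. }
  pers H0 (LSub c b) H1 P1. pers H0 (LSub b a) H2 P2.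
  destruct (fire s0 (mkT 7 0 0 0 a b c Bot Bot (LF 0 Bot)) (max m m0) H0) as [n [Hn Hin]].
  - intros n Hn. unfold prems; cbnp.
    rewrite (inbT (P1 n ltac:(lia))), (inbT (P2 n ltac:(lia))). simpl.
    destruct (lform_eq_dec (LSub b a) (LSub c b)); [contradiction|discriminate].
  - unfold prems in Hin; cbnpH Hin.
    rewrite (inbT (P1 n ltac:(lia))), (inbT (P2 n ltac:(lia))) in Hin. simpl in Hin.
    destruct (lform_eq_dec (LSub b a) (LSub c b)); [contradiction|].
    destruct Hin as [Hin|[]]. fin n Hin.
Qed.

Lemma satSub s0 y a b : ok s0 -> Lset s0 (LIn y a) -> Lset s0 (LSub a b) -> Lset s0 (LIn y b).
Proof.
  intros H0 H1 H2. pers H0 (LIn y a) H1 P1. pers H0 (LSub a b) H2 P2.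
  destruct (fire s0 (mkT 8 y 0 0 a b (NVar 0) Bot Bot (LF 0 Bot)) (max m m0) H0) as [n [Hn Hin]].
  - intros n Hn. unfold prems; cbnp.
    rewrite (inbT (P1 n ltac:(lia))), (inbT (P2 n ltac:(lia))). discriminate.
  - unfold prems in Hin; cbnpH Hin.
    rewrite (inbT (P1 n ltac:(lia))), (inbT (P2 n ltac:(lia))) in Hin. simpl in Hin.
    destruct Hin as [Hin|[]]. fin n Hin.
Qed.

Lemma satT s0 x : ok s0 -> exists a, Lset s0 (LN a x).
Proof.
  intros H0.
  destruct (fire s0 (mkT 9 x 0 0 (NVar 0) (NVar 0) (NVar 0) Bot Bot (LF 0 Bot)) 0 H0) as [n [Hn Hin]].
  - intros n Hn. unfold prems; cbnp. discriminate.
  - unfold prems in Hin; cbnpH Hin. simpl in Hin. destruct Hin as [Hin|[]]. eexists; fin n Hin.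
Qed.

Lemma satW s0 a x : ok s0 -> Lset s0 (LN a x) -> Lset s0 (LIn x a).
Proof.
  intros H0 H1. pers H0 (LN a x) H1 P1.
  destruct (fire s0 (mkT 10 x 0 0 a (NVar 0) (NVar 0) Bot Bot (LF 0 Bot)) m H0) as [n [Hn Hin]].
  - intros n Hn. unfold prems; cbnp. rewrite (inbT (P1 n ltac:(lia))). discriminate.
  - unfold prems in Hin; cbnpH Hin. rewrite (inbT (P1 n ltac:(lia))) in Hin. simpl in Hin.
    destruct Hin as [Hin|[]]. fin n Hin.
Qed.

Lemma satC s0 a x : ok s0 -> Lset s0 (LN a x) -> Lset s0 (LN (NSing x) x) /\ Lset s0 (LSub (NSing x) a).
Proof.
  intros H0 H1. pers H0 (LN a x) H1 P1.
  destruct (fire s0 (mkT 11 x 0 0 a (NVar 0) (NVar 0) Bot Bot (LF 0 Bot)) m H0) as [n [Hn Hin]].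
  - intros n Hn. unfold prems; cbnp. rewrite (inbT (P1 n ltac:(lia))). discriminate.
  - unfold prems in Hin; cbnpH Hin. rewrite (inbT (P1 n ltac:(lia))) in Hin. simpl in Hin.
    destruct Hin as [Hin|[]]. split; fin n Hin.
Qed.

Lemma satRA1 s0 u v p : ok s0 -> Lset s0 (LIn u (NSing v)) -> Lset s0 (LF v (Atom p)) -> Lset s0 (LF u (Atom p)).
Proof.
  intros H0 H1 H2. pers H0 (LIn u (NSing v)) H1 P1. pers H0 (LF v (Atom p)) H2 P2.
  destruct (fire s0 (mkT 12 u v p (NVar 0) (NVar 0) (NVar 0) Bot Bot (LF 0 Bot)) (max m m0) H0) as [n [Hn Hin]].
  - intros n Hn. unfold prems; cbnp.
    rewrite (inbT (P1 n ltac:(lia))), (inbT (P2 n ltac:(lia))). discriminate.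
  - unfold prems in Hin; cbnpH Hin.
    rewrite (inbT (P1 n ltac:(lia))), (inbT (P2 n ltac:(lia))) in Hin. simpl in Hin.
    destruct Hin as [Hin|[]]. fin n Hin.
Qed.
Lemma satRA2 s0 u v p : ok s0 -> Lset s0 (LIn u (NSing v)) -> Lset s0 (LF u (Atom p)) -> Lset s0 (LF v (Atom p)).
Proof.
  intros H0 H1 H2. pers H0 (LIn u (NSing v)) H1 P1. pers H0 (LF u (Atom p)) H2 P2.
  destruct (fire s0 (mkT 13 u v p (NVar 0) (NVar 0) (NVar 0) Bot Bot (LF 0 Bot)) (max m m0) H0) as [n [Hn Hin]].
  - intros n Hn. unfold prems; cbnp.
    rewrite (inbT (P1 n ltac:(lia))), (inbT (P2 n ltac:(lia))). discriminate.
  - unfold prems in Hin; cbnpH Hin.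
    rewrite (inbT (P1 n ltac:(lia))), (inbT (P2 n ltac:(lia))) in Hin. simpl in Hin.
    destruct Hin as [Hin|[]]. fin n Hin.
Qed.
Lemma satRN1 s0 u v a : ok s0 -> Lset s0 (LIn u (NSing v)) -> Lset s0 (LN a v) -> Lset s0 (LN a u).
Proof.
  intros H0 H1 H2. pers H0 (LIn u (NSing v)) H1 P1. pers H0 (LN a v) H2 P2.
  destruct (fire s0 (mkT 14 u v 0 a (NVar 0) (NVar 0) Bot Bot (LF 0 Bot)) (max m m0) H0) as [n [Hn Hin]].
  - intros n Hn. unfold prems; cbnp.
    rewrite (inbT (P1 n ltac:(lia))), (inbT (P2 n ltac:(lia))). discriminate.
  - unfold prems in Hin; cbnpH Hin.
    rewrite (inbT (P1 n ltac:(lia))), (inbT (P2 n ltac:(lia))) in Hin. simpl in Hin.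
    destruct Hin as [Hin|[]]. fin n Hin.
Qed.
Lemma satRN2 s0 u v a : ok s0 -> Lset s0 (LIn u (NSing v)) -> Lset s0 (LN a u) -> Lset s0 (LN a v).
Proof.
  intros H0 H1 H2. pers H0 (LIn u (NSing v)) H1 P1. pers H0 (LN a u) H2 P2.
  destruct (fire s0 (mkT 15 u v 0 a (NVar 0) (NVar 0) Bot Bot (LF 0 Bot)) (max m m0) H0) as [n [Hn Hin]].
  - intros n Hn. unfold prems; cbnp.
    rewrite (inbT (P1 n ltac:(lia))), (inbT (P2 n ltac:(lia))). discriminate.
  - unfold prems in Hin; cbnpH Hin.
    rewrite (inbT (P1 n ltac:(lia))), (inbT (P2 n ltac:(lia))) in Hin. simpl in Hin.
    destruct Hin as [Hin|[]]. fin n Hin.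
Qed.

Lemma consAtom s0 x p : ok s0 -> Lset s0 (LF x (Atom p)) -> Rset s0 (LF x (Atom p)) -> False.
Proof.
  intros H0 H1 H2. pers H0 (LF x (Atom p)) H1 P1. persR H0 (LF x (Atom p)) H2 P2.
  apply (br_ok s0 H0 (max m m0)).
  apply (pullL _ _ _ (P1 (max m m0) ltac:(lia))). apply (pullR _ _ _ (P2 (max m m0) ltac:(lia))). apply d_init.
Qed.
Lemma consBot s0 x : ok s0 -> Lset s0 (LF x Bot) -> False.
Proof.
  intros H0 [m Hm]. apply (br_ok s0 H0 m). apply (pullL _ _ _ Hm). apply d_bot.
Qed.


Definition Erel s0 (u v : nat) : Prop := Lset s0 (LIn u (NSing v)).
Definition eqv s0 := clos_refl_sym_trans nat (Erel s0).
Definition cls s0 (x : nat) : nat -> Prop := fun m => eqv s0 m x.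

Lemma cls_eq s0 x y : eqv s0 x y -> cls s0 x = cls s0 y.
Proof.
  intro H. unfold cls. apply functional_extensionality; intro m.
  apply propositional_extensionality; split; intro H2.
  - eapply rst_trans; eauto.
  - eapply rst_trans; eauto. apply rst_sym; auto.
Qed.
Lemma cls_inv s0 x y : cls s0 x = cls s0 y -> eqv s0 x y.
Proof.
  intro H. assert (cls s0 y y) as Hy by apply rst_refl. rewrite <- H in Hy. apply rst_sym; exact Hy.
Qed.

Lemma transA s0 p u v : ok s0 -> eqv s0 u v -> (Lset s0 (LF u (Atom p)) <-> Lset s0 (LF v (Atom p))).
Proof.
  intros H0 H. induction H; try tauto.
  split; intro H1; [eapply satRA2|eapply satRA1]; eauto.
Qed.
Lemma transN s0 a u v : ok s0 -> eqv s0 u v -> (Lset s0 (LN a u) <-> Lset s0 (LN a v)).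
Proof.
  intros H0 H. induction H; try tauto.
  split; intro H1; [eapply satRN2|eapply satRN1]; eauto.
Qed.

Definition Wd : Type := ((nat -> Prop) * option nlabel)%type.

Definition den s0 (a : nlabel) (v : Wd) : Prop :=
  match snd v with
  | None => exists y, Lset s0 (LIn y a) /\ fst v = cls s0 y
  | Some c => Lset s0 (LSub c a) /\ exists y, Lset s0 (LIn y c) /\ fst v = cls s0 y
  end.

Definition swap (p q v : Wd) : Wd :=
  if excluded_middle_informative (v = p) then q
  else if excluded_middle_informative (v = q) then p else v.

Lemma swap_inv p q v : swap p q (swap p q v) = v.
Proof.
  unfold swap. destruct (excluded_middle_informative (v = p)) as [->|H1].
  - destruct (excluded_middle_informative (q = p)) as [->|H2]; auto.
    destruct (excluded_middle_informative (q = q)); [auto|congruence].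
  - destruct (excluded_middle_informative (v = q)) as [->|H2].
    + destruct (excluded_middle_informative (p = p)); congruence.
    + destruct (excluded_middle_informative (v = p)); [congruence|].
      destruct (excluded_middle_informative (v = q)); congruence.
Qed.
Lemma swap_p p q : swap p q p = q.
Proof. unfold swap. destruct (excluded_middle_informative (p = p)); congruence. Qed.
Lemma swap_id p v : swap p p v = v.
Proof. unfold swap. repeat destruct excluded_middle_informative; congruence. Qed.
Lemma swap_fst p q v : fst p = fst q -> fst (swap p q v) = fst v.
Proof. unfold swap. repeat destruct excluded_middle_informative; subst; auto. Qed.

Definition N0 s0 (w : nat -> Prop) (al : Wd -> Prop) : Prop :=
  (exists a y, w = cls s0 y /\ Lset s0 (LN a y) /\ forall v, al v <-> den s0 a v)
  \/ (forall v, al v <-> v = (w, None)).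
Definition Nm s0 (u : Wd) (al : Wd -> Prop) : Prop :=
  N0 s0 (fst u) (fun v => al (swap (fst u, None) u v)).
Definition Vm s0 (p : nat) (u : Wd) : Prop := exists y, fst u = cls s0 y /\ Lset s0 (LF y (Atom p)).

Lemma Nm_real s0 w al : Nm s0 (w, None) al <-> N0 s0 w al.
Proof.
  unfold Nm; simpl.
  replace (fun v => al (swap (w, None) (w, None) v)) with al; [tauto|].
  apply functional_extensionality; intro v; rewrite swap_id; auto.
Qed.

Lemma condT (s : Wd -> Wd) (inv : forall v, s (s v) = v) (P : (Wd -> Prop) -> Prop)
  (FA FB : Wd -> Prop) (hA : forall v, FA (s v) <-> FA v) (hB : forall v, FB (s v) <-> FB v) :
  (forall al, P (fun v => al (s v)) -> (exists y, al y /\ FA y) ->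
     exists be, P (fun v => be (s v)) /\ (forall z, be z -> al z) /\ (exists y, be y /\ FA y) /\
       (forall z, be z -> FA z -> FB z))
  <->
  (forall al, P al -> (exists y, al y /\ FA y) ->
     exists be, P be /\ (forall z, be z -> al z) /\ (exists y, be y /\ FA y) /\
       (forall z, be z -> FA z -> FB z)).
Proof.
  assert (forall al : Wd -> Prop, (fun v => (fun v => al (s v)) (s v)) = al) as Hf.
  { intro al. apply functional_extensionality; intro v; simpl; rewrite inv; auto. }
  split; intros H al Hal [y [Hy HyA]].
  - destruct (H (fun v => al (s v))) as [be [H1 [H2 [[y' [H3 H4]] H5]]]].
    + rewrite Hf; auto.
    + exists (s y); rewrite inv, hA; auto.
    + exists (fun v => be (s v)); split; [auto|split; [|split]].
      * intros z Hz. apply H2 in Hz. rewrite inv in Hz; auto.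
      * exists (s y'); rewrite inv, hA; auto.
      * intros z Hz HzA. apply hB. apply H5; auto. apply hA; auto.
  - destruct (H (fun v => al (s v))) as [be [H1 [H2 [[y' [H3 H4]] H5]]]].
    + auto.
    + exists (s y); rewrite inv, hA; auto.
    + exists (fun v => be (s v)); split; [rewrite Hf; auto|split; [|split]].
      * intros z Hz. apply H2 in Hz. rewrite inv in Hz; auto.
      * exists (s y'); rewrite inv, hA; auto.
      * intros z Hz HzA. apply hB. apply H5; auto. apply hA; auto.
Qed.

Lemma bisim s0 A : forall u, forces Wd (Nm s0) (Vm s0) u A <-> forces Wd (Nm s0) (Vm s0) (fst u, None) A.
Proof.
  induction A as [p| |A IHA B IHB|A IHA B IHB|A IHA B IHB|A IHA B IHB]; intro u; simpl.
  - unfold Vm; simpl; tauto.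
  - tauto.
  - rewrite IHA, IHB; tauto.
  - rewrite IHA, IHB; tauto.
  - rewrite IHA, IHB; tauto.
  - set (p := (fst u, None) : Wd).
    assert (forall v, fst (swap p u v) = fst v) as Hfst by (intro; apply swap_fst; reflexivity).
    assert (Hc := condT (swap p u) (swap_inv p u) (N0 s0 (fst u))
      (fun v => forces Wd (Nm s0) (Vm s0) v A) (fun v => forces Wd (Nm s0) (Vm s0) v B)).
    assert (forall v, forces Wd (Nm s0) (Vm s0) (swap p u v) A <-> forces Wd (Nm s0) (Vm s0) v A) as hA.
    { intro v. rewrite IHA, (IHA v), Hfst. tauto. }
    assert (forall v, forces Wd (Nm s0) (Vm s0) (swap p u v) B <-> forces Wd (Nm s0) (Vm s0) v B) as hB.
    { intro v. rewrite IHB, (IHB v), Hfst. tauto. }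
    specialize (Hc hA hB).
    assert (forall al, Nm s0 p al <-> N0 s0 (fst u) al) as Hp by (intro; apply Nm_real).
    split; intro H.
    + intros al Hal Hex. pose proof (proj1 (Hp al) Hal) as Hal'.
      destruct (proj1 Hc H al Hal' Hex) as [be [H1 H2]]. exists be; split; auto. apply (proj2 (Hp be)); auto.
    + apply Hc. intros al Hal Hex. destruct (H al) as [be [H1 H2]]; [apply (proj2 (Hp al)); auto|auto|].
      exists be; split; auto. apply (proj1 (Hp be)); auto.
Qed.


Notation FM s0 := (forces Wd (Nm s0) (Vm s0)).

Lemma den_real s0 a v : ok s0 -> den s0 a v -> exists y, Lset s0 (LIn y a) /\ fst v = cls s0 y.
Proof.
  intros H0. unfold den. destruct (snd v) as [c|].
  - intros [H1 [y [H2 H3]]]. exists y; split; auto. eapply satSub; eauto.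
  - auto.
Qed.
Lemma den_sub s0 c a v : ok s0 -> Lset s0 (LSub c a) -> den s0 c v -> den s0 a v.
Proof.
  intros H0 H. unfold den. destruct (snd v) as [c'|].
  - intros [H1 H2]. split; auto. eapply satTr; eauto.
  - intros [y [H1 H2]]. exists y; split; auto. eapply satSub; eauto.
Qed.
Lemma den_None s0 a y : Lset s0 (LIn y a) -> den s0 a (cls s0 y, None).
Proof. intro H. unfold den; simpl. eauto. Qed.

Lemma N0_self s0 w al : ok s0 -> N0 s0 w al -> al (w, None).
Proof.
  intros H0 [[a [y [-> [H1 H2]]]]|H].
  - apply H2. apply den_None. eapply satW; eauto.
  - apply H; auto.
Qed.

Lemma FMfst s0 v y A : fst v = cls s0 y -> (FM s0 v A <-> FM s0 (cls s0 y, None) A).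
Proof. intro H. rewrite bisim, H. tauto. Qed.

Lemma swap_q p q : swap p q q = p.
Proof. unfold swap. repeat destruct excluded_middle_informative; congruence. Qed.

Lemma model_ne s0 : ok s0 -> nbhd_nonempty Wd (Nm s0).
Proof.
  intros H0 u al H. unfold Nm in H. apply N0_self in H; auto. eexists; exact H.
Qed.
Lemma model_cent s0 : ok s0 -> centering Wd (Nm s0).
Proof.
  intros H0. split.
  - intros u al H. unfold Nm in H. apply N0_self in H; auto. cbv beta in H.
    rewrite swap_p in H. exact H.
  - intros u. unfold Nm. right. intro v. split.
    + intro H. rewrite <- (swap_inv (fst u, None) u v), H. apply swap_q.
    + intros ->. apply swap_p.
Qed.

Lemma eqv_step s0 y x : Lset s0 (LIn y (NSing x)) -> cls s0 y = cls s0 x.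
Proof. intro H. apply cls_eq. apply rst_step. exact H. Qed.

Lemma exL s0 A a : ok s0 -> (forall x, Lset s0 (LF x A) -> FM s0 (cls s0 x, None) A) ->
  Lset s0 (LEx a A) -> exists v, den s0 a v /\ FM s0 v A.
Proof.
  intros H0 IAL H. destruct (satExL s0 a A H0 H) as [y [H1 H2]].
  exists (cls s0 y, None). split; [apply den_None; auto | apply IAL; auto].
Qed.
Lemma exR s0 A a : ok s0 -> (forall x, Rset s0 (LF x A) -> ~ FM s0 (cls s0 x, None) A) ->
  Rset s0 (LEx a A) -> forall v, den s0 a v -> ~ FM s0 v A.
Proof.
  intros H0 IAR H v Hv. destruct (den_real s0 a v H0 Hv) as [y [H1 H2]].
  rewrite (FMfst s0 v y A H2). apply IAR. eapply satExR; eauto.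
Qed.
Lemma allImpL s0 A B c : ok s0 -> (forall x, Rset s0 (LF x A) -> ~ FM s0 (cls s0 x, None) A) ->
  (forall x, Lset s0 (LF x B) -> FM s0 (cls s0 x, None) B) ->
  Lset s0 (LAll c (Imp A B)) -> forall v, den s0 c v -> FM s0 v A -> FM s0 v B.
Proof.
  intros H0 IAR IBL H v Hv. destruct (den_real s0 c v H0 Hv) as [y [H1 H2]].
  rewrite !(FMfst s0 v y _ H2). intro HA.
  destruct (satImpL s0 y A B H0 (satAllL s0 y c _ H0 H1 H)) as [HR|HL].
  - exfalso; eapply IAR; eauto.
  - apply IBL; auto.
Qed.
Lemma allImpR s0 A B c : ok s0 -> (forall x, Lset s0 (LF x A) -> FM s0 (cls s0 x, None) A) ->
  (forall x, Rset s0 (LF x B) -> ~ FM s0 (cls s0 x, None) B) ->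
  Rset s0 (LAll c (Imp A B)) -> exists v, den s0 c v /\ FM s0 v A /\ ~ FM s0 v B.
Proof.
  intros H0 IAL IBR H. destruct (satAllR s0 c _ H0 H) as [y [H1 H2]].
  destruct (satImpR s0 y A B H0 H2) as [H3 H4].
  exists (cls s0 y, None). split; [apply den_None; auto|]. split; [apply IAL; auto | apply IBR; auto].
Qed.

Lemma truth s0 A : ok s0 ->
  (forall x, Lset s0 (LF x A) -> FM s0 (cls s0 x, None) A) /\
  (forall x, Rset s0 (LF x A) -> ~ FM s0 (cls s0 x, None) A).
Proof.
  intros H0.
  induction A as [p| |A [IAL IAR] B [IBL IBR]|A [IAL IAR] B [IBL IBR]|A [IAL IAR] B [IBL IBR]
                 |A [IAL IAR] B [IBL IBR]]; split; intros x Hx; simpl.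
  - exists x; auto.
  - intros [y [Hy Hl]]. apply cls_inv in Hy.
    apply (consAtom s0 x p H0); auto. apply (transA s0 p x y H0 Hy); auto.
  - apply (consBot s0 x H0 Hx).
  - auto.
  - destruct (satAndL s0 x A B H0 Hx). auto.
  - intros [HA HB]. destruct (satAndR s0 x A B H0 Hx); [eapply IAR|eapply IBR]; eauto.
  - destruct (satOrL s0 x A B H0 Hx); auto.
  - destruct (satOrR s0 x A B H0 Hx). intros [HA|HB]; [eapply IAR|eapply IBR]; eauto.
  - intro HA. destruct (satImpL s0 x A B H0 Hx); auto. exfalso; eapply IAR; eauto.
  - destruct (satImpR s0 x A B H0 Hx) as [Ha Hb]. intro Hf. apply (IBR x); auto.
  -
    intros al Hal [v [Hv HvA]]. apply (proj1 (Nm_real s0 _ _)) in Hal.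
    destruct Hal as [[a [y [Hxy [HN Hal]]]]|Hal].
    + apply cls_inv in Hxy. assert (HNx := proj2 (transN s0 a x y H0 Hxy) HN).
      apply Hal in Hv.
      destruct (satCondL s0 a x A B H0 HNx Hx) as [HR|HC].
      * exfalso; exact (exR s0 A a H0 IAR HR v Hv HvA).
      * destruct (satCndL s0 x a A B H0 HC) as [c [Hc1 [Hc2 [Hc3 Hc4]]]].
        exists (den s0 c). split; [apply (proj2 (Nm_real s0 _ _)); left; exists c, x; repeat split; auto; tauto|].
        split; [intros z Hz; apply Hal; eapply den_sub; eauto|].
        split; [apply (exL s0 A c H0 IAL Hc3)|].
        apply (allImpL s0 A B c H0 IAR IBL Hc4).
    + apply Hal in Hv. subst v.
      assert (FM s0 (cls s0 x, None) B) as HB.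
      { destruct (satT s0 x H0) as [a0 Ha0]. destruct (satC s0 a0 x H0 Ha0) as [HS _].
        destruct (satCondL s0 (NSing x) x A B H0 HS Hx) as [HR|HC].
        - exfalso. apply (exR s0 A _ H0 IAR HR (cls s0 x, None)); auto.
          apply den_None. eapply satW; eauto.
        - destruct (satCndL s0 x _ A B H0 HC) as [c [Hc1 [Hc2 [Hc3 Hc4]]]].
          destruct (exL s0 A c H0 IAL Hc3) as [w [Hw HwA]].
          assert (HwB := allImpL s0 A B c H0 IAR IBL Hc4 w Hw HwA).
          destruct (den_real s0 _ w H0 (den_sub s0 _ _ w H0 Hc2 Hw)) as [y [Hy1 Hy2]].
          rewrite (eqv_step s0 y x Hy1) in Hy2. rewrite (FMfst s0 w x B Hy2) in HwB. exact HwB. }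
      exists (fun v => v = (cls s0 x, None)). split; [apply (proj2 (Nm_real s0 _ _)); right; tauto|].
      split; [intros z ->; apply Hal; auto|].
      split; [exists (cls s0 x, None); auto|].
      intros z -> _; auto.
  -
    intro H. destruct (satCondR s0 x A B H0 Hx) as [a [Ha1 [Ha2 Ha3]]].
    destruct (H (den s0 a)) as [be [Hbe [Hsub [[w [Hw HwA]] Hall]]]].
    + apply (proj2 (Nm_real s0 _ _)); left; exists a, x; repeat split; auto; tauto.
    + apply (exL s0 A a H0 IAL Ha2).
    + apply (proj1 (Nm_real s0 _ _)) in Hbe. destruct Hbe as [[c [y [Hxy [HN Hbe]]]]|Hbe].
      * apply cls_inv in Hxy. assert (HNx := proj2 (transN s0 c x y H0 Hxy) HN).
        assert (den s0 c (cls s0 x, Some c)) as Hcl.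
        { unfold den; simpl. split; [apply satRef; auto | exists x; split; auto; eapply satW; eauto]. }
        assert (Hca := Hsub _ (proj2 (Hbe _) Hcl)). unfold den in Hca; simpl in Hca. destruct Hca as [Hca _].
        destruct (satBarR s0 c x a A B H0 HNx Hca Ha3) as [HR|HR].
        -- apply (exR s0 A c H0 IAR HR w); auto. apply Hbe; auto.
        -- destruct (allImpR s0 A B c H0 IAL IBR HR) as [v [Hv [HvA HvB]]].
           apply HvB. apply Hall; auto. apply Hbe; auto.
      * apply Hbe in Hw. subst w.
        assert (HB := Hall _ (proj2 (Hbe _) eq_refl) HwA).
        destruct (satC s0 a x H0 Ha1) as [HS HSa].
        destruct (satBarR s0 (NSing x) x a A B H0 HS HSa Ha3) as [HR|HR].
        -- apply (exR s0 A _ H0 IAR HR (cls s0 x, None)); auto. apply den_None; eapply satW; eauto.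
        -- destruct (allImpR s0 A B _ H0 IAL IBR HR) as [v [Hv [HvA HvB]]].
           destruct (den_real s0 _ v H0 Hv) as [y [Hy1 Hy2]].
           rewrite (eqv_step s0 y x Hy1) in Hy2. rewrite (FMfst s0 v x B Hy2) in HvB. auto.
Qed.


Theorem mainTheorem19 (A : form) :
  valid_PC A -> forall x : nat, deriv [] [LF x A].
Proof.
  intros HV x. apply NNPP. intro Hn.
  assert (H0 : ok ([], [LF x A])) by exact Hn.
  assert (HR : Rset ([], [LF x A]) (LF x A)) by (exists 0; simpl; auto).
  apply (proj2 (truth _ A H0) x HR).
  apply HV.
  - constructor. exact ((fun _ => True), None).
  - apply model_ne; auto.
  - apply model_cent; auto.
Qed.
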